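(* For $j\ge 1$ and $1\le p\le n-1$, let $V_{j,p}$ be the subspace of $V^{\otimes n}$ spanned by the basis vectors $\mathbf i$ with $c_p(\mathbf i)\ge j$. If $\mathbf i$ is a basis vector lying in $V_{j,p}$, then $$T_p^{-1}\cdots T_{n-1}^{-1}S_{n-1}\cdots S_p(\mathbf i)\in \mathbf i+V_{j+1,p}.$$
   Context: Let $m,n\ge 1$ and $\mathbb K=\mathbb C(q,Q_1,\dots,Q_m)$, the field of rational functions in indeterminates $q,Q_1,\dots,Q_m$. Fix nonnegative integers $k_1,\dots,k_m,\ell_1,\dots,\ell_m$ with $N=\sum_{c=1}^m(k_c+\ell_c)>0$. Let $V$ be a $\mathbb K$-superspace with homogeneous basis $\{v^{(c)}_a:1\le c\le m,\ 1\le a\le k_c+\ell_c\}$, where $v^{(c)}_a$ is even if $a\le k_c$ and odd if $a>k_c$; $v^{(c)}_a$ has colour $c$. Totally order this basis by $v^{(c)}_a<v^{(c')}_b$ iff $c<c'$, or $c=c'$ and $a<b$, and write it as $u_1<\cdots<u_N$. Let $\bar j\in\{0,1\}$ be the parity of $u_j$ and $\mathrm{col}(j)$ its colour. For $\mathbf i=(i_1,\dots,i_n)\in\{1,\dots,N\}^n$ write also $\mathbf i$ for the basis vector $u_{i_1}\otimes\cdots\otimes u_{i_n}$ of $V^{\otimes n}$, put $c_t(\mathbf i)=\mathrm{col}(i_t)$, and let $\mathbf i s_a$ be $\mathbf i$ with entries $a,a+1$ interchanged. Linear operators on $V^{\otimes n}$ ($1\le a\le n-1$): $s_a(\mathbf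 i)=(-1)^{\bar i_a}\mathbf i$ if $i_a=i_{a+1}$, $s_a(\mathbf i)=(-1)^{\bar i_a\bar i_{a+1}}\mathbf i s_a$ otherwise; $T_a(\mathbf i)=(q-q^{-1})\mathbf i+(-1)^{\bar i_a\bar i_{a+1}}\mathbf i s_a$ if $i_a<i_{a+1}$; $T_a(\mathbf i)=\frac{(q-q^{-1})+(-1)^{\bar i_a}(q+q^{-1})}{2}\mathbf i$ if $i_a=i_{a+1}$; $T_a(\mathbf i)=(-1)^{\bar i_a\bar i_{a+1}}\mathbf i s_a$ if $i_a>i_{a+1}$ (each $T_a$ is invertible); $S_a(\mathbf i)=T_a(\mathbf i)$ if $c_a(\mathbf i)=c_{a+1}(\mathbf i)$, and $S_a(\mathbf i)=s_a(\mathbf i)$ otherwise. Products of operators denote composition. *)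

(* Defs.v *)
From HB Require Import structures.
From mathcomp Require Import all_boot all_algebra.
From mathcomp Require Import Rstruct.
From mathcomp Require Import complex.
From mathcomp Require Import mpoly.
From mathcomp Require Import fraction.
Set Implicit Arguments. Unset Strict Implicit. Unset Printing Implicit Defensive.
Import GRing.Theory.
Local Open Scope ring_scope.

(* The field K = C(q, Q_1, ..., Q_m): fraction field of the polynomial    *)
(* ring over C = R[i] in m+1 variables; variable 0 is q, variable c is Q_c. *)
Definition CC : fieldType := (Rdefinitions.R)[i].
Notation Kfield m := {fraction {mpoly CC[m.+1]}}.
Definition indet (m : nat) (t : 'I_m.+1) : Kfield m :=
  FracField.tofrac (mpolyX CC (mnm1 t) : {mpoly CC[m.+1]}).
Definition qvar (m : nat) : Kfield m := indet (0 : 'I_m.+1).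

Section Operators.
Variables (K : fieldType) (q : K).
Variables (m n : nat) (k l : nat -> nat).

(* The ordered basis u_1 < ... < u_N of V, listed in increasing order:    *)
(* the pair (c, a) stands for v^(c)_a (colour c in 1..m, 1 <= a <= k_c+l_c). *)
Definition basis_list : seq (nat * nat) :=
  flatten [seq [seq (c, a) | a <- iota 1 (k c + l c)] | c <- iota 1 m].

Definition dimV : nat := size basis_list.

(* A basis vector u_j is represented by j : 'I_dimV (u_{j+1} in the paper);
   the order of 'I_dimV is the order of the basis. *)
Definition col (j : 'I_dimV) : nat := (nth (0, 0) basis_list j).1.
(* parity: true = odd, i.e. a > k_c *)
Definition par (j : 'I_dimV) : bool :=
  let: (c, a) := nth (0, 0) basis_list j in (k c < a)%N.

(* basis vectors of V^{\otimes n}: tuples i = (i_1, ..., i_n) *)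
Local Notation Idx := {ffun 'I_n -> 'I_dimV}.
(* vectors of V^{\otimes n}, as coordinate functions on the basis *)
Local Notation tens := {ffun Idx -> K}.

Definition bvec (i : Idx) : tens := [ffun j => (j == i)%:R].

Definition swapf (x y : 'I_n) (i : Idx) : Idx :=
  [ffun t => if t == x then i y else if t == y then i x else i t].

Definition scl (c : K) (v : tens) : tens := [ffun t => c * v t].

Definition sgn (b : bool) : K := if b then -1 else 1.

(* images of basis vectors; x, y are the (0-based) positions a, a+1 *)
Definition s_b (x y : 'I_n) (i : Idx) : tens :=
  if i x == i y then scl (sgn (par (i x))) (bvec i)
  else scl (sgn (par (i x) && par (i y))) (bvec (swapf x y i)).

Definition T_b (x y : 'I_n) (i : Idx) : tens :=
  if (i x < i y)%N then
    scl (q - q^-1) (bvec i) + scl (sgn (par (i x) && par (i y))) (bvec (swapf x y i))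
  else if i x == i y then
    scl (((q - q^-1) + sgn (par (i x)) * (q + q^-1)) / 2%:R) (bvec i)
  else scl (sgn (par (i x) && par (i y))) (bvec (swapf x y i)).

Definition S_b (x y : 'I_n) (i : Idx) : tens :=
  if col (i x) == col (i y) then T_b x y i else s_b x y i.

Definition linext (f : Idx -> tens) (v : tens) : tens := \sum_i scl (v i) (f i).

(* operator indexed by a (1-based, 1 <= a <= n-1), acting on the tensor  *)
(* factors a and a+1, i.e. 0-based positions a-1 and a                   *)
Definition at_pos (f : 'I_n -> 'I_n -> Idx -> tens) (a : nat) (v : tens) : tens :=
  match insub a.-1, insub a with
  | Some x, Some y => linext (f x y) v
  | _, _ => v
  end.

Definition s_op := at_pos s_b.
Definition T_op := at_pos T_b.
Definition S_op := at_pos S_b.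

(* S_{n-1} ... S_p v  (S_p applied first) *)
Definition S_chain (p : nat) (v : tens) : tens :=
  foldl (fun w a => S_op a w) v (iota p (n - p)).

(* T_p^{-1} ... T_{n-1}^{-1} v  (T_{n-1}^{-1} applied first), for given inverses *)
Definition Tinv_chain (Tinv : nat -> tens -> tens) (p : nat) (v : tens) : tens :=
  foldl (fun w a => Tinv a w) v (rev (iota p (n - p))).

Definition in_V (j p : nat) (v : tens) : Prop :=
  forall i : Idx, v i != 0 -> forall x : 'I_n, nat_of_ord x = p.-1 -> (j <= col (i x))%N.

End Operators.

Notation Idx m n k l := {ffun 'I_n -> 'I_(dimV m k l)}.
Notation tens K m n k l := {ffun Idx m n k l -> K}.

(* Main.v *)
Require Import Defs.
From HB Require Import structures.
From mathcomp Require Import all_boot all_algebra.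
From mathcomp Require Import mpoly fraction.
From mathcomp Require Import zify ring.
Import GRing.Theory.
Local Open Scope ring_scope.
Set Implicit Arguments. Unset Strict Implicit. Unset Printing Implicit Defensive.

Lemma sorted_flat (f : nat -> nat) s : sorted leq s ->
  sorted leq (flatten [seq nseq (f c) c | c <- s]).
Proof.
rewrite !(sorted_pairwise leq_trans).
elim: s => //= c s IH /andP[Hc Hs]. rewrite pairwise_cat IH // andbT.
apply/andP; split.
  apply/allrelP => x y /nseqP[-> _] /flattenP[z /mapP[c' Hc' ->] /nseqP[-> _]].
  exact: (allP Hc c' Hc').
elim: (f c) => //= n' ->; rewrite andbT; apply/allP => x /nseqP[-> _]; exact: leqnn.
Qed.

Section Ops.
Variables (K : fieldType) (q : K) (m n : nat) (k l : nat -> nat).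
Local Notation Idx := (Idx m n k l).
Local Notation tens := (tens K m n k l).
Local Notation colr := (@Defs.col m k l).

Lemma col_mono (a b : 'I_(dimV m k l)) : (colr a < colr b)%N -> (a < b)%N.
Proof.
have Hs : sorted leq [seq x.1 | x <- basis_list m k l].
  rewrite /basis_list map_flatten -map_comp.
  rewrite (eq_map (g := fun c => nseq (k c + l c) c)); last first.
    move=> c /=; rewrite -map_comp /=.
    have mc (s : seq nat) : [seq c | _ <- s] = nseq (size s) c by elim: s => //= ? ? ->.
    by rewrite mc size_iota.
  apply: sorted_flat; exact: iota_sorted.
have E (j : 'I_(dimV m k l)) : colr j = nth 0%N [seq x.1 | x <- basis_list m k l] j.
  by rewrite (nth_map (0,0)%N) // ltn_ord.
move=> H; rewrite ltnNge; apply/negP => Hba; move: H.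
rewrite !E ltnNge => /negP; apply.
apply: (sorted_leq_nth leq_trans leqnn) => //; rewrite inE size_map ltn_ord //.
Qed.

Definition supp (A : Idx -> Prop) (v : tens) := forall t, v t != 0 -> A t.

Lemma supp0 A : supp A 0.
Proof. by move=> t; rewrite ffunE eqxx. Qed.

Lemma suppD A v w : supp A v -> supp A w -> supp A (v + w).
Proof.
move=> Hv Hw t; rewrite ffunE; case: (eqVneq (v t) 0) => [->|/Hv //].
by rewrite add0r => /Hw.
Qed.

Lemma suppN A v : supp A v -> supp A (- v).
Proof. by move=> Hv t; rewrite ffunE oppr_eq0 => /Hv. Qed.

Lemma suppB A v w : supp A v -> supp A w -> supp A (v - w).
Proof. by move=> Hv Hw; apply: suppD => //; apply: suppN. Qed.

Lemma supp_scl A c v : supp A v -> supp A (scl c v).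
Proof. by move=> Hv t; rewrite ffunE mulf_eq0 negb_or => /andP[_ /Hv]. Qed.

Lemma supp_bvec (A : Idx -> Prop) i : A i -> supp A (bvec K i).
Proof. move=> Hi t; rewrite /bvec ffunE; case E: (t == i); first by move/eqP: E => ->. by rewrite eqxx. Qed.

Lemma supp_sum A (F : Idx -> tens) : (forall t, supp A (F t)) -> supp A (\sum_t F t).
Proof.
move=> H; apply: (big_ind (supp A)) => //; [exact: supp0| exact: suppD].
Qed.

Lemma supp_mono (A B : Idx -> Prop) v : (forall t, A t -> B t) -> supp A v -> supp B v.
Proof. by move=> AB Hv t /Hv /AB. Qed.

Definition lin (g : tens -> tens) := forall c v w, g (scl c v + w) = scl c (g v) + g w.

Lemma scl1 (v : tens) : scl 1 v = v.
Proof. by apply/ffunP => t; rewrite ffunE mul1r. Qed.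
Lemma scl0 (v : tens) : scl 0 v = 0.
Proof. by apply/ffunP => t; rewrite !ffunE mul0r. Qed.
Lemma sclA a b (v : tens) : scl a (scl b v) = scl (a * b) v.
Proof. by apply/ffunP => t; rewrite !ffunE mulrA. Qed.
Lemma sclDr a (v w : tens) : scl a (v + w) = scl a v + scl a w.
Proof. by apply/ffunP => t; rewrite !ffunE mulrDr. Qed.
Lemma sclN a (v : tens) : scl a (- v) = - scl a v.
Proof. by apply/ffunP => t; rewrite !ffunE mulrN. Qed.
Lemma scl_0 a : scl a (0 : tens) = 0.
Proof. by apply/ffunP => t; rewrite !ffunE mulr0. Qed.

Lemma lin_add g : lin g -> forall v w, g (v + w) = g v + g w.
Proof. by move=> H v w; rewrite -{1}(scl1 v) H scl1. Qed.
Lemma lin0 g : lin g -> g 0 = 0.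
Proof.
move=> H; have E := lin_add H 0 0; rewrite addr0 in E.
by apply: (addIr (g 0)); rewrite add0r -E.
Qed.
Lemma lin_scl g : lin g -> forall c v, g (scl c v) = scl c (g v).
Proof. by move=> H c v; rewrite -[scl c v]addr0 H lin0 // addr0. Qed.
Lemma lin_opp g : lin g -> forall v, g (- v) = - g v.
Proof.
move=> H v; apply/eqP; rewrite -subr_eq0 opprK -lin_add // addNr lin0 //.
Qed.
Lemma lin_sub g : lin g -> forall v w, g (v - w) = g v - g w.
Proof. by move=> H v w; rewrite lin_add // lin_opp. Qed.

Lemma decomp (v : tens) : v = \sum_t scl (v t) (bvec K t).
Proof.
apply/ffunP => s; rewrite sum_ffunE (bigD1 s) //= big1 ?addr0.
  by rewrite !ffunE eqxx mulr1.
by move=> t /negbTE ts; rewrite !ffunE eq_sym ts mulr0.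
Qed.

Lemma lin_decomp g v : lin g -> g v = \sum_t scl (v t) (g (bvec K t)).
Proof.
move=> H; rewrite {1}(decomp v) (big_morph g (lin_add H) (lin0 H)).
by apply: eq_bigr => t _; rewrite lin_scl.
Qed.

Lemma supp_lin g (A B : Idx -> Prop) v : lin g -> supp A v ->
  (forall t, A t -> supp B (g (bvec K t))) -> supp B (g v).
Proof.
move=> Hg Hv H; rewrite (lin_decomp v Hg); apply: supp_sum => t.
case: (eqVneq (v t) 0) => [->|/Hv At]; first by rewrite scl0; apply: supp0.
by apply: supp_scl; apply: H.
Qed.

Lemma linext_lin (f : Idx -> tens) : lin (linext f).
Proof.
move=> c v w; apply/ffunP => t; rewrite /linext !ffunE !sum_ffunE mulr_sumr -big_split /=.
by apply: eq_bigr => i _; rewrite !ffunE mulrDl mulrA.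
Qed.

Lemma linext_bvec (f : Idx -> tens) i : linext f (bvec K i) = f i.
Proof.
rewrite /linext (bigD1 i) //= big1 ?addr0 ?ffunE ?eqxx ?scl1 //.
by move=> t /negbTE ts; rewrite ffunE ts scl0.
Qed.

Lemma at_posE (f : 'I_n -> 'I_n -> Idx -> tens) a (x y : 'I_n) v : val x = a.-1 -> val y = a ->
  at_pos f a v = linext (f x y) v.
Proof. by move=> Hx Hy; rewrite /at_pos -Hx valK -Hy valK. Qed.

Lemma at_pos_lin (f : 'I_n -> 'I_n -> Idx -> tens) a : lin (at_pos f a).
Proof.
move=> c v w; rewrite /at_pos; case: (insub a.-1) => [x|] //; case: (insub a) => [y|] //.
exact: linext_lin.
Qed.

Lemma lin_foldl (F : tens -> nat -> tens) s :
  (forall a, a \in s -> lin (F^~ a)) -> lin (fun v => foldl F v s).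
Proof.
elim: s => [|a s IH] H c v w //=.
rewrite (H a (mem_head _ _)) IH // => b Hb; apply: H; by rewrite in_cons Hb orbT.
Qed.


Lemma swx (x y : 'I_n) (i : Idx) : swapf x y i x = i y.
Proof. by rewrite ffunE eqxx. Qed.
Lemma swy (x y : 'I_n) (i : Idx) : x != y -> swapf x y i y = i x.
Proof. by move=> H; rewrite ffunE eq_sym (negbTE H) eqxx. Qed.
Lemma swo (x y : 'I_n) (i : Idx) t : t != x -> t != y -> swapf x y i t = i t.
Proof. by move=> H1 H2; rewrite ffunE (negbTE H1) (negbTE H2). Qed.
Lemma swK (x y : 'I_n) (i : Idx) : x != y -> swapf x y (swapf x y i) = i.
Proof.
move=> xy; apply/ffunP => t; rewrite [LHS]ffunE.
case: ifP => [/eqP->|tx]; first by rewrite swy.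
case: ifP => [/eqP->|ty]; first by rewrite swx.
by rewrite swo ?tx ?ty.
Qed.

Lemma sgn_sq b : sgn K b * sgn K b = 1.
Proof. by case: b; rewrite /sgn ?mulN1r ?opprK ?mulr1. Qed.

Definition sig (x y : 'I_n) (i : Idx) := sgn K (par (i x) && par (i y)).

Lemma sig_sw (x y : 'I_n) (i : Idx) : x != y -> sig x y (swapf x y i) = sig x y i.
Proof. by move=> xy; rewrite /sig swx swy // andbC. Qed.

Lemma bvec_ii (i : Idx) : bvec K i i = 1.
Proof. by rewrite /bvec ffunE eqxx. Qed.

Lemma Tb_lt (x y : 'I_n) (i : Idx) : (i x < i y)%N ->
  T_b q x y i = scl (q - q^-1) (bvec K i) + scl (sig x y i) (bvec K (swapf x y i)).
Proof. by move=> H; rewrite /T_b H. Qed.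

Lemma Tb_eq (x y : 'I_n) (i : Idx) : i x = i y ->
  T_b q x y i = scl (((q - q^-1) + sgn K (par (i x)) * (q + q^-1)) / 2%:R) (bvec K i).
Proof. by move=> H; rewrite /T_b H ltnn eqxx. Qed.

Lemma ord_neq (N : nat) (a b : 'I_N) : (val a < val b)%N -> (b == a) = false.
Proof. by move=> H; apply/negbTE; rewrite -val_eqE /= gtn_eqF. Qed.

Lemma Tb_gt (x y : 'I_n) (i : Idx) : (i y < i x)%N ->
  T_b q x y i = scl (sig x y i) (bvec K (swapf x y i)).
Proof. by move=> H; rewrite /T_b ltnNge (ltnW H) /= ord_neq. Qed.

Section Inv.
Variables (a : nat) (x y : 'I_n) (Hx : val x = a.-1) (Hy : val y = a) (Ha : (0 < a)%N).
Variables (Tinv : tens -> tens) (HT1 : forall v, T_op q a (Tinv v) = v)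
  (HT2 : forall v, Tinv (T_op q a v) = v).

Lemma xy : x != y.
Proof. by rewrite -val_eqE /= Hx Hy neq_ltn ltn_predL Ha. Qed.

Lemma T_bvec (i : Idx) : T_op q a (bvec K i) = T_b q x y i.
Proof. by rewrite /T_op (at_posE _ _ Hx Hy) linext_bvec. Qed.

Lemma T_lin : lin (T_op q a).
Proof. exact: at_pos_lin. Qed.

Lemma Tinv_lin : lin Tinv.
Proof.
move=> c v w.
have -> : scl c v + w = T_op q a (scl c (Tinv v) + Tinv w) by rewrite T_lin !HT1.
by rewrite HT2.
Qed.

Lemma Tinv_lt (i : Idx) : (i x < i y)%N -> Tinv (bvec K i) = scl (sig x y i) (bvec K (swapf x y i)).
Proof.
move=> H.
have E : T_op q a (bvec K (swapf x y i)) = scl (sig x y i) (bvec K i).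
  by rewrite T_bvec Tb_gt ?swx ?swy ?xy // swK ?xy // sig_sw ?xy.
have := congr1 Tinv E; rewrite HT2 (lin_scl Tinv_lin) => ->.
by rewrite sclA sgn_sq scl1.
Qed.

Lemma supp_Tinv (i : Idx) : supp (fun t => t = i \/ t = swapf x y i) (Tinv (bvec K i)).
Proof.
case: (ltngtP (nat_of_ord (i x)) (nat_of_ord (i y))) => H.
- by rewrite Tinv_lt //; apply: supp_scl; apply: supp_bvec; simpl; right.
- set j := swapf x y i.
  have Hj : (j x < j y)%N by rewrite /j swx swy ?xy.
  have E : T_op q a (bvec K j) = scl (q - q^-1) (bvec K j) + scl (sig x y i) (bvec K i).
    by rewrite T_bvec Tb_lt // /j swK ?xy // sig_sw ?xy.
  have Ej := congr1 Tinv E; rewrite HT2 (lin_add Tinv_lin) !(lin_scl Tinv_lin) in Ej.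
  have F : scl (sig x y i) (Tinv (bvec K i)) = bvec K j - scl (q - q^-1) (Tinv (bvec K j)).
    by rewrite {1}Ej addrC addKr.
  have -> : Tinv (bvec K i) = scl (sig x y i) (bvec K j - scl (q - q^-1) (Tinv (bvec K j))).
    by rewrite -F sclA sgn_sq scl1.
  rewrite Tinv_lt // /j swK ?xy //.
  apply: supp_scl; apply: suppB; first by apply: supp_bvec; simpl; right.
  by apply: supp_scl; apply: supp_scl; apply: supp_bvec; simpl; left.
- have Ei : i x = i y by apply: val_inj.
  set lam := (((q - q^-1) + sgn K (par (i x)) * (q + q^-1)) / 2%:R).
  have E : T_op q a (bvec K i) = scl lam (bvec K i) by rewrite T_bvec Tb_eq.
  have Ej := congr1 Tinv E; rewrite HT2 (lin_scl Tinv_lin) in Ej.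
  have nz : lam != 0.
    apply/negP => /eqP l0; move: Ej; rewrite l0 scl0 => Ej0.
    have := congr1 (fun v : tens => v i) Ej0.
    by rewrite /= bvec_ii ffunE => /eqP; rewrite oner_eq0.
  have -> : Tinv (bvec K i) = scl lam^-1 (bvec K i) by rewrite {2}Ej sclA mulVf ?scl1.
  by apply: supp_scl; apply: supp_bvec; simpl; left.
Qed.

End Inv.

Lemma ltn_ne (N : nat) (a b : 'I_N) : (val a < val b)%N -> a != b.
Proof. by move=> H; rewrite -val_eqE /= ltn_eqF. Qed.

Lemma lin_comp f g : lin f -> lin g -> lin (fun v => f (g v)).
Proof. by move=> Hf Hg c v w; rewrite Hg Hf. Qed.

Lemma lin_subid g : lin g -> lin (fun v => g v - v).
Proof.
move=> Hg c v w; rewrite Hg; apply/ffunP => t; rewrite !ffunE.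
by rewrite mulrBr; ring.
Qed.

Section Main.
Variables (Tinv : nat -> tens -> tens)
  (HT : forall a : nat, (1 <= a <= n - 1)%N ->
       forall v, T_op q a (Tinv a v) = v /\ Tinv a (T_op q a v) = v).

Definition Z p (v : tens) : tens := Tinv_chain Tinv p (S_chain q p v).

Definition Pp p := forall i : Idx,
  supp (fun t => (forall s : 'I_n, (val s < p.-1)%N -> t s = i s) /\
                 (forall z : 'I_n, nat_of_ord z = p.-1 -> (colr (i z) < colr (t z))%N))
       (Z p (bvec K i) - bvec K i).

Lemma S_chain_step p (v : tens) : (p < n)%N -> S_chain q p v = S_chain q p.+1 (S_op q p v).
Proof. by move=> H; rewrite /S_chain -(subnSK H). Qed.

Lemma Tinv_chain_step p (v : tens) : (p < n)%N ->
  Tinv_chain Tinv p v = Tinv p (Tinv_chain Tinv p.+1 v).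
Proof. by move=> H; rewrite /Tinv_chain -(subnSK H) /= rev_cons foldl_rcons. Qed.

Lemma Z_n (v : tens) : Z n v = v.
Proof. by rewrite /Z /Tinv_chain /S_chain subnn. Qed.

Lemma Tinv_lin_a a : (1 <= a <= n - 1)%N -> lin (Tinv a).
Proof.
move=> /andP[a1 an].
have ax : (a.-1 < n)%N by lia.
have ay : (a < n)%N by lia.
have [H1 H2] : (forall v, T_op q a (Tinv a v) = v) /\ (forall v, Tinv a (T_op q a v) = v).
  by split=> v; have [] := HT (a := a) _ v => //; rewrite a1 an.
exact: Tinv_lin H1 H2.
Qed.

Lemma Z_lin p : (1 <= p)%N -> lin (Z p).
Proof.
move=> p1; apply: lin_comp.
  apply: (lin_foldl (F := fun w a => Tinv a w)) => a.
  rewrite mem_rev mem_iota => /andP[H1 H2]; apply: Tinv_lin_a; lia.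
apply: (lin_foldl (F := fun w a => S_op q a w)) => a _; exact: at_pos_lin.
Qed.

Lemma step p : (1 <= p)%N -> (p < n)%N -> Pp p.+1 -> Pp p.
Proof.
move=> p1 pn IH i.
have px : (p.-1 < n)%N by lia.
pose x := Ordinal px; pose y := Ordinal pn.
have Hx : val x = p.-1 by [].
have Hy : val y = p by [].
have [HT1 HT2] : (forall v, T_op q p (Tinv p v) = v) /\ (forall v, Tinv p (T_op q p v) = v).
  by split=> v; have [] := HT (a := p) _ v => //; apply/andP; split; lia.
have xy' : x != y := xy Hx Hy p1.
have L : lin (Tinv p) := Tinv_lin HT1 HT2.
have Zp : forall v, Z p v = Tinv p (Z p.+1 (S_op q p v)).
  by move=> v; rewrite /Z S_chain_step // Tinv_chain_step.
set v := S_op q p (bvec K i).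
have Ev : v = S_b q x y i by rewrite /v /S_op (at_posE _ _ Hx Hy) linext_bvec.
set c := colr (i x).
set beta := if (colr (i x) < colr (i y))%N then q - q^-1 else 0.
have Hv : v = T_op q p (bvec K i) - scl beta (bvec K i).
  rewrite Ev (T_bvec Hx Hy) /S_b /beta.
  case: (eqVneq (colr (i x)) (colr (i y))) => Hc.
    by rewrite Hc ltnn scl0 subr0.
  have ne : i x != i y by apply: contraNneq Hc => ->.
  rewrite /s_b (negbTE ne); case: ltnP => Hlt.
    by rewrite Tb_lt ?col_mono // addrC addKr.
  have Hlt' : (colr (i y) < colr (i x))%N by rewrite ltn_neqAle eq_sym Hc Hlt.
  by rewrite Tb_gt ?col_mono // scl0 subr0.
have -> : Z p (bvec K i) - bvec K i = Tinv p (Z p.+1 v - v) - scl beta (Tinv p (bvec K i)).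
  have Tv : Tinv p v = bvec K i - scl beta (Tinv p (bvec K i)).
    by rewrite Hv (lin_sub L) HT2 (lin_scl L).
  rewrite Zp -/v -{1}(subrK v (Z p.+1 v)) (lin_add L (Z p.+1 v - v) v) Tv.
  by rewrite [bvec K i - _]addrC addrA addrK.
pose A := (fun t : Idx => (forall s : 'I_n, (val s < p.-1)%N -> t s = i s) /\
                 (forall z : 'I_n, nat_of_ord z = p.-1 -> (colr (i z) < colr (t z))%N)).
have zx : forall z : 'I_n, nat_of_ord z = p.-1 -> z = x by move=> z Hz; apply: val_inj.
have sxy : forall s : 'I_n, (val s < p.-1)%N -> s != x /\ s != y.
  by move=> s Hs; split; apply: ltn_ne => /=; [exact: Hs | exact: leq_trans Hs (leq_pred _)].
have Asw : forall t : Idx, (forall s : 'I_n, (val s < p.-1)%N -> t s = i s) ->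
    (c < colr (t y))%N -> A (swapf x y t).
  move=> t Ht Hc; split.
    by move=> s Hs; have [h1 h2] := sxy s Hs; rewrite swo // Ht.
  by move=> z /zx ->; rewrite swx.
apply: suppB; last first.
  rewrite /beta; case: ifP => Hb; last by rewrite scl0; apply: supp0.
  rewrite (Tinv_lt Hx Hy p1 HT1 HT2) ?col_mono //.
  by do 2 apply: supp_scl; apply: supp_bvec; exact: (Asw i (fun _ _ => erefl) Hb).
pose C := (fun t : Idx => (forall s : 'I_n, (val s < p.-1)%N -> t s = i s) /\ (c <= colr (t y))%N).
pose D := (fun t : Idx => (forall s : 'I_n, (val s < p.-1)%N -> t s = i s) /\ (c < colr (t y))%N).
have SC : supp C v.
  have Ci : (c <= colr (i y))%N -> C i by [].
  have Csw : C (swapf x y i).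
    split; last by rewrite swy.
    by move=> s Hs; have [h1 h2] := sxy s Hs; rewrite swo.
  rewrite Ev /S_b.
  case: (eqVneq (colr (i x)) (colr (i y))) => Hc.
    have Ci' := Ci (eq_leq Hc).
    case: (ltngtP (nat_of_ord (i x)) (nat_of_ord (i y))) => H.
    - by rewrite Tb_lt //; apply: suppD; apply: supp_scl; apply: supp_bvec.
    - by rewrite Tb_gt //; apply: supp_scl; apply: supp_bvec.
    - by rewrite Tb_eq; [apply: supp_scl; apply: supp_bvec | apply: val_inj].
  have ne : i x != i y by apply: contraNneq Hc => ->.
  by rewrite /s_b (negbTE ne); apply: supp_scl; apply: supp_bvec.
have SD : supp D (Z p.+1 v - v).
  apply: (supp_lin (g := fun w => Z p.+1 w - w) (lin_subid (Z_lin _)) SC) => // t [Ct1 Ct2].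
  apply: (supp_mono _ (IH t)) => t' [H1 H2]; split.
    by move=> s Hs; rewrite H1 ?Ct1 //; lia.
  exact: leq_ltn_trans Ct2 (H2 y erefl).
apply: (supp_lin L SD) => t' [D1 D2].
case: (leqP (colr (t' x)) c) => Hc'.
  have Hlt : (t' x < t' y)%N by apply: col_mono; exact: leq_ltn_trans Hc' D2.
  rewrite (Tinv_lt Hx Hy p1 HT1 HT2 Hlt).
  by apply: supp_scl; apply: supp_bvec; exact: (Asw t' D1 D2).
have S := supp_Tinv Hx Hy p1 HT1 HT2 (i := t').
apply: (supp_mono _ S) => t'' [->|->]; last exact: (Asw t' D1 D2).
by split => // z /zx ->.
Qed.

Lemma Pall p : (1 <= p <= n)%N -> Pp p.
Proof.
move=> /andP[p1 pn]; move: {2}(n - p)%N (erefl (n - p)%N) => d.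
elim: d p p1 pn => [|d IHd] p p1 pn Hd.
  have -> : p = n by lia.
  by move=> i; rewrite Z_n subrr; apply: supp0.
apply: step => //; first by lia.
apply: IHd; lia.
Qed.

End Main.

End Ops.

Theorem mainTheorem2 (m n : nat) (k l : nat -> nat) :
  (1 <= m)%N -> (1 <= n)%N -> (0 < dimV m k l)%N ->
  forall (Tinv : nat -> tens (Kfield m) m n k l -> tens (Kfield m) m n k l),
    (forall a : nat, (1 <= a <= n - 1)%N ->
       forall v, T_op (qvar m) a (Tinv a v) = v /\
                 Tinv a (T_op (qvar m) a v) = v) ->
  forall (j p : nat), (1 <= j)%N -> (1 <= p <= n - 1)%N ->
  forall i : Idx m n k l,
    in_V j p (bvec (Kfield m) i) ->
    in_V j.+1 p
      (Tinv_chain Tinv p (S_chain (qvar m) p (bvec (Kfield m) i))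
       - bvec (Kfield m) i).
Proof.
move=> m1 n1 d0 Tinv HT j p j1 /andP[p1 pn] i Hi t Ht z Hz.
have P := @Pall _ (qvar m) m n k l Tinv HT p.
have [_ H2] := P ltac:(apply/andP; split; lia) i t Ht.
have := H2 z Hz.
have := Hi i ltac:(by rewrite bvec_ii oner_eq0) z Hz.
exact: leq_ltn_trans.
Qed.
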